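(* Let $A\in\mathbb{R}^{n\times d}$ be fixed with all rows of Euclidean norm at most $2$, let $c,c'\in\mathbb{R}^d$ be fixed, and let $I\in\binom{[n]}{d}$ with $A_I$ invertible. If $Z\in\mathbb{R}^d$ has a $1$-log-Lipschitz probability density function, then for $m=\ln(1/0.99)/(2d)$, \[ \Pr\big[I\in M(A,c+Z,c'+Z,m)\big]\ge 0.99\Pr\big[I\in M(A,c+Z,c'+Z,0)\big]. \]
   Context: $M(A,y,y',m)$ is the set of bases $I\in\binom{[n]}{d}$ such that there exists $w\in[y,y']$ with $w^\top A_I^{-1}\ge m$ componentwise. A density $\mu$ is $1$-log-Lipschitz if $|\log\mu(x)-\log\mu(y)|\le\|x-y\|$ for all $x,y$. *)

(* Defs.v *)
From HB Require Import structures.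
From mathcomp Require Import all_boot all_order all_algebra.
From mathcomp Require Import all_classical all_reals all_analysis.

Set Implicit Arguments.
Unset Strict Implicit.
Unset Printing Implicit Defensive.

Import Order.TTheory GRing.Theory Num.Theory.
Local Open Scope ring_scope.
Local Open Scope classical_set_scope.

Section Defs.
Variable R : realType.

Definition enorm (d : nat) (v : 'rV[R]_d) : R := Num.sqrt (\sum_(j < d) v 0 j ^+ 2).

(* A_I : the d x d submatrix of A made of the rows indexed by I (in increasing
   order of index); meaningful when #|I| = d. *)
Definition subrows (n d : nat) (A : 'M[R]_(n, d)) (I : {set 'I_n}) : 'M[R]_d :=
  \matrix_(i < d, j < d) nth 0 [seq A k j | k <- enum I] i.

(* M(A,y,y',m): the bases I (|I| = d, A_I invertible) such that some w on the
   segment [y,y'] satisfies w^T A_I^{-1} >= m componentwise.  Vectors of R^d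
   are represented as row vectors, so w^T is just w. *)
Definition Mset (n d : nat) (A : 'M[R]_(n, d)) (y y' : 'rV[R]_d) (m : R)
  : set {set 'I_n} :=
  [set I : {set 'I_n} | [/\ #|I| = d, subrows A I \in unitmx &
     exists2 t : R, 0 <= t <= 1 &
       forall j : 'I_d, m <= (((1 - t) *: y + t *: y') *m invmx (subrows A I)) 0 j]].

(* Iterated Lebesgue integral over R^k of a function of the coordinates
   (coordinates are given by a function nat -> R; only the first k matter). *)
Fixpoint iint (k : nat) (F : (nat -> R) -> \bar R) : \bar R :=
  match k with
  | 0 => F (fun _ => 0)
  | k'.+1 => (\int[@lebesgue_measure R]_t
                iint k' (fun x => F (fun i => if i == k' then t else x i)))%E
  end.

(* Lebesgue integral over R^d (as an iterated integral, which is the Lebesgue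
   integral on R^d for nonnegative Borel functions by Tonelli). *)
Definition leb_int (d : nat) (f : 'rV[R]_d -> \bar R) : \bar R :=
  iint d (fun x => f (\row_(i < d) x i)).

Definition is_pdf (d : nat) (mu : 'rV[R]_d -> R) : Prop :=
  (forall x, 0 <= mu x) /\ leb_int (fun x => (mu x)%:E) = 1%E.

(* mu is 1-log-Lipschitz (this requires mu > 0 so that log mu is defined). *)
Definition log_lipschitz1 (d : nat) (mu : 'rV[R]_d -> R) : Prop :=
  (forall x, 0 < mu x) /\
  (forall x y, `|ln (mu x) - ln (mu y)| <= enorm (x - y)).

Definition Pr (d : nat) (mu : 'rV[R]_d -> R) (S : set 'rV[R]_d) : \bar R :=
  leb_int (fun x => (\1_S x * mu x)%:E).

End Defs.

(* Main.v *)
Require Import Defs.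
From HB Require Import structures.
From mathcomp Require Import all_boot all_order all_algebra.
From mathcomp Require Import all_classical all_reals all_analysis.
From mathcomp Require Import ring lra.

Import Order.TTheory GRing.Theory Num.Theory.
Local Open Scope ring_scope.
Local Open Scope classical_set_scope.

Module Aux.
Set Implicit Arguments.
Unset Strict Implicit.
Unset Printing Implicit Defensive.
Import numFieldNormedType.Exports.
Section Shift.
Variable R : realType.
Variable a : R.

Lemma mshift : measurable_fun [set: R] (fun x : R => x + a).
Proof. have := @measurable_realfun.measurable_funD _ _ R setT idfun (cst a) (@measurable_id _ _ _) (measurable_cst a). by []. Qed.

Definition shm : set (measurableTypeR R) -> \bar R := fun A => lebesgue_measure ((fun x : R => x + a) @^-1` A).

Let shm0 : shm set0 = 0%E.
Proof. by rewrite /shm preimage_set0 measure0. Qed.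

Let shm_ge0 A : (0 <= shm A)%E.
Proof. exact: measure_ge0. Qed.

Let shm_sigma_additive : semi_sigma_additive shm.
Proof.
move=> F mF tF mUF; rewrite /shm preimage_bigcup.
apply: measure_semi_sigma_additive.
- by move=> n; rewrite -[X in measurable X]setTI; exact: (mshift measurableT (mF n)).
- apply/trivIsetP => /= i j _ _ ij; rewrite -preimage_setI.
  by move/trivIsetP : tF => /(_ _ _ _ _ ij) ->//; rewrite preimage_set0.
- by rewrite -preimage_bigcup -[X in measurable X]setTI; exact: (mshift measurableT mUF).
Qed.

HB.instance Definition _ := isMeasure.Build _ _ _ shm shm0 shm_ge0 shm_sigma_additive.

Lemma shm_leb A : measurable A -> lebesgue_measure A = shm A.
Proof.
move=> mA; apply: (@lebesgue_measure_unique R shm) => // X [[x y] _ <-] /=.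
rewrite /shm.
have -> : (fun x0 : R => x0 + a) @^-1` `]x, y]%classic = `](x - a), (y - a)]%classic.
  apply/funext => t; apply/propext; rewrite /= !in_itv /= ltrBlDr lerBrDr //.
rewrite !lebesgue_measure_itv /= !lte_fin ltrD2r.
case: ifP => // _. rewrite -!EFinD; congr (_%:E). by rewrite opprB addrA subrK.
Qed.
End Shift.

Import HBNNSimple.
Section HS.
Variable R : realType.
Variable a : R.
Variable h : {nnsfun (measurableTypeR R) >-> R}.
Definition hs : measurableTypeR R -> R := fun t => h (t + a).
Let hs_m : measurable_fun [set: measurableTypeR R] hs.
Proof. exact: (measurableT_comp (measurable_funPT h) (mshift a)). Qed.
HB.instance Definition _ := isMeasurableFun.Build _ _ _ _ hs hs_m.
Let hs_f : finite_set (range hs).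
Proof. apply: (sub_finite_set _ (fimfunP h)) => _ [t _ <-]; by exists (t + a). Qed.
HB.instance Definition _ := FiniteImage.Build _ _ hs hs_f.
Let hs_ge0 x : 0 <= hs x. Proof. exact: fun_ge0. Qed.
HB.instance Definition _ := isNonNegFun.Build _ _ hs hs_ge0.
Definition hsn : {nnsfun (measurableTypeR R) >-> R} := [nnsfun of hs].
End HS.

Lemma int_shift_ge (R : realType) (F : R -> \bar R) (a : R) :
  (forall x, 0 <= F x)%E ->
  (\int[@lebesgue_measure R]_t F t <= \int[@lebesgue_measure R]_t F (t + a)%R)%E.
Proof.
move=> F0; rewrite !ge0_integralTE //.
apply: ge_ereal_sup => _ [h hF <-]; apply: ereal_sup_ubound.
exists (hsn a h); first by move=> t /=; exact: hF.
rewrite /sintegral; apply: eq_fsbigr => x _; congr (_ * _)%E.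
rewrite /= /hs. 
have -> : ((fun t : R => h (t + a)) @^-1` [set x]) = (fun t : R => t + a) @^-1` (h @^-1` [set x]) by [].
by rewrite [RHS](shm_leb a).
Qed.

Lemma int_mono (R : realType) (F G : R -> \bar R) :
  (forall x, 0 <= F x)%E -> (forall x, F x <= G x)%E ->
  (\int[@lebesgue_measure R]_t F t <= \int[@lebesgue_measure R]_t G t)%E.
Proof.
move=> F0 FG; rewrite !ge0_integralTE //; last by move=> x; exact: le_trans (F0 x) (FG x).
apply: le_ereal_sup => _ [h hF <-]; exists h => // x; exact: le_trans (hF x) (FG x).
Qed.

Lemma int_scale (R : realType) (F : R -> \bar R) (k : R) :
  (0 <= k)%R -> (forall x, 0 <= F x)%E ->
  (k%:E * \int[@lebesgue_measure R]_t F t <= \int[@lebesgue_measure R]_t (k%:E * F t))%E.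
Proof.
move=> k0 F0; have [->|kp] := eqVneq k 0%R.
  by rewrite mul0e; apply: integral_ge0 => x _; rewrite mul0e.
have kp' : (0 < k)%R by rewrite lt0r kp.
rewrite !ge0_integralTE //; last by move=> x; rewrite mule_ge0.
rewrite -ereal_sup_pZl //.
apply: le_ereal_sup => _ [_ [h hF <-] <-]; exists (scale_nnsfun h k0).
  by move=> x /=; rewrite EFinM; apply: lee_pmul => //; rewrite lee_fin; exact: fun_ge0.
exact: (sintegralrM _ k h).
Qed.

Section Iint.
Variable R : realType.
Local Open Scope ereal_scope.

Lemma iint_ge0 k (F : (nat -> R) -> \bar R) : (forall x, 0 <= F x) -> 0 <= iint k F.
Proof.
elim: k F => [|k IH] F F0 /=; first exact: F0.
by apply: integral_ge0 => t _; apply: IH => x; exact: F0.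
Qed.

Lemma iint_mono k (F G : (nat -> R) -> \bar R) :
  (forall x, 0 <= F x) -> (forall x, F x <= G x) -> iint k F <= iint k G.
Proof.
elim: k F G => [|k IH] F G F0 FG /=; first exact: FG.
apply: int_mono => [t|t]; first by apply: iint_ge0 => x; exact: F0.
by apply: IH => x; [exact: F0|exact: FG].
Qed.

Lemma iint_scale k (F : (nat -> R) -> \bar R) (c : R) : (0 <= c)%R ->
  (forall x, 0 <= F x) -> c%:E * iint k F <= iint k (fun x => c%:E * F x).
Proof.
move=> c0; elim: k F => [|k IH] F F0 /=; first by [].
apply: le_trans (int_scale c0 _) _ => [t|]; first by apply: iint_ge0 => x; exact: F0.
apply: int_mono => [t|t]; first by rewrite mule_ge0 //; apply: iint_ge0 => x; exact: F0.
by apply: IH => x; exact: F0.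
Qed.

Lemma iint_shift k (F : (nat -> R) -> \bar R) (a : nat -> R) :
  (forall i, (k <= i)%N -> a i = 0%R) ->
  (forall x, 0 <= F x) -> iint k F <= iint k (fun x => F (fun i => x i + a i)%R).
Proof.
elim: k F a => [|k IH] F a a0 F0 /=.
  by rewrite (_ : (fun i => 0 + a i)%R = (fun=> 0%R)) //; apply/funext => i; rewrite a0 // addr0.
set H := fun s : R => iint k (fun x => F (fun i => if i == k then s else x i)).
apply: le_trans (int_shift_ge (a k) _) _ => [t|]; first by apply: iint_ge0 => x; exact: F0.
apply: int_mono => [t|t]; first by apply: iint_ge0 => x; exact: F0.
pose a' := fun i => if i == k then 0%R else a i.
have := IH (fun y => F (fun i => if i == k then (t + a k)%R else y i)) a'.
have -> : (fun x => F (fun i => if i == k then (t + a k)%R else (x i + a' i)%R)) =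
          (fun x => F (fun i => (if i == k then t else x i) + a i)%R).
  apply/funext => x; congr F; apply/funext => i; rewrite /a'.
  by case: (i =P k) => [->|].
apply => //.
move=> i ki; rewrite /a'; case: (i =P k) => // /eqP ik; apply: a0.
by rewrite ltn_neqAle eq_sym ik.
Qed.
End Iint.
Section Enorm.
Variable R : realType.
Variable d : nat.
Implicit Types u v : 'rV[R]_d.

Lemma enorm_ge0 v : 0 <= enorm v.
Proof. exact: sqrtr_ge0. Qed.

Lemma enorm_sq v : enorm v ^+ 2 = \sum_j v 0 j ^+ 2.
Proof. by rewrite /enorm sqr_sqrtr // sumr_ge0 // => j _; exact: sqr_ge0. Qed.

Lemma cauchy_schwarz u v : \sum_j u 0 j * v 0 j <= enorm u * enorm v.
Proof.
set p := \sum_j u 0 j * v 0 j.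
set su := \sum_j u 0 j ^+ 2.
set sv := \sum_j v 0 j ^+ 2.
have su0 : 0 <= su by rewrite sumr_ge0 // => j _; exact: sqr_ge0.
have sv0 : 0 <= sv by rewrite sumr_ge0 // => j _; exact: sqr_ge0.
have [p0|p0] := lerP p 0; first by apply: le_trans p0 _; rewrite mulr_ge0 // enorm_ge0.
have key : p ^+ 2 <= su * sv.
  have [su_eq0|su_pos] := eqVneq su 0.
    have u0 : forall j, u 0 j = 0.
      move=> j; apply/eqP; rewrite -sqrf_eq0; apply/eqP.
      move/eqP: su_eq0; rewrite psumr_eq0 => [/allP H|j' _]; last exact: sqr_ge0.
      by apply/eqP; apply: H; rewrite mem_index_enum.
    have : p = 0 by rewrite /p big1 // => j _; rewrite u0 mul0r.
    by move=> pe; rewrite pe in p0; rewrite ltxx in p0.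
  have su_gt0 : 0 < su by rewrite lt0r su_pos.
  set t := - p / su.
  have H : 0 <= \sum_j (u 0 j * t + v 0 j) ^+ 2 by rewrite sumr_ge0 // => j _; exact: sqr_ge0.
  have E : \sum_j (u 0 j * t + v 0 j) ^+ 2 = t ^+ 2 * su + 2 * t * p + sv.
    rewrite /su /p /sv mulr_sumr mulr_sumr -!big_split /=; apply: eq_bigr => j _.
    by rewrite /=; ring.
  rewrite E /t in H.
  have : 0 <= sv - p ^+ 2 / su.
    apply: le_trans H _; rewrite le_eqVlt; apply/orP; left; apply/eqP.
    by field; rewrite su_pos.
  rewrite subr_ge0 ler_pdivrMr // => H2; by rewrite mulrC.
have -> : p = Num.sqrt (p ^+ 2) by rewrite sqrtr_sqr ger0_norm // ltW.
rewrite /enorm -sqrtrM // ler_sqrt //; exact: mulr_ge0.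
Qed.

Lemma enorm_triangle u v : enorm (u + v) <= enorm u + enorm v.
Proof.
rewrite -(@ler_pXn2r _ 2) // ?nnegrE ?addr_ge0 ?enorm_ge0 //.
rewrite enorm_sq sqrrD !enorm_sq.
have -> : \sum_j (u + v) 0 j ^+ 2 = \sum_j u 0 j ^+ 2 + 2 * \sum_j u 0 j * v 0 j + \sum_j v 0 j ^+ 2.
  rewrite mulr_sumr -!big_split; apply: eq_bigr => j _ /=; rewrite !mxE; ring.
rewrite lerD2r lerD2l; have := cauchy_schwarz u v; rewrite mulr2n; lra.
Qed.


Lemma enorm_scale (k : R) v : enorm (k *: v) = `|k| * enorm v.
Proof.
rewrite /enorm -(sqrtr_sqr k) -sqrtrM ?sqr_ge0 //; congr Num.sqrt.
by rewrite mulr_sumr; apply: eq_bigr => j _; rewrite !mxE exprMn.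
Qed.

Lemma enorm0 : enorm (0 : 'rV[R]_d) = 0.
Proof. by rewrite /enorm big1 ?sqrtr0 // => j _; rewrite mxE expr0n. Qed.

Lemma enorm_sum (k : nat) (F : 'I_k -> 'rV[R]_d) :
  enorm (\sum_(j < k) F j) <= \sum_(j < k) enorm (F j).
Proof.
elim: k F => [|k IH] F; first by rewrite !big_ord0 enorm0.
rewrite !big_ord_recr /=; apply: le_trans (enorm_triangle _ _) _.
by rewrite lerD2r IH.
Qed.
End Enorm.
Lemma subrows_row (R : realType) n d (A : 'M[R]_(n,d)) (I : {set 'I_n}) (hI : #|I| = d) (j : 'I_d) :
  exists k, row j (subrows A I) = row k A.
Proof.
have : (j < size (enum I))%N by rewrite -cardE hI.
case E: (enum I) => [|x0 s] // js.
exists (nth x0 (enum I) j); apply/rowP => l; rewrite !mxE E (nth_map x0) //.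
Qed.

Lemma mset_shift (R : realType) n d (A : 'M[R]_(n,d)) (I : {set 'I_n}) (c c' z δ : 'rV[R]_d) (m : R) :
  subrows A I \in unitmx -> δ *m invmx (subrows A I) = const_mx m ->
  I \in Mset A (c + z) (c' + z) 0 -> I \in Mset A (c + (z + δ)) (c' + (z + δ)) m.
Proof.
move=> hU hδ; rewrite !in_setE /Mset /= => -[h1 h2 [t t01 ht]]; split => //.
exists t => // j; have := ht j.
have -> : (1 - t) *: (c + (z + δ)) + t *: (c' + (z + δ)) = ((1 - t) *: (c + z) + t *: (c' + z)) + δ.
  by rewrite !scalerDr; apply/rowP => l; rewrite !mxE; ring.
move=> H; rewrite mulmxDl hδ mxE [const_mx _ _ _]mxE; move: H; set w := (_ *m _) 0 j; lra.
Qed.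

End Aux.
Import Aux.

Theorem corollary4p6 (R : realType) (n d : nat) (A : 'M[R]_(n, d))
  (hA : forall i : 'I_n, enorm (row i A) <= 2)
  (c c' : 'rV[R]_d) (I : {set 'I_n}) (hI : #|I| = d)
  (hAI : subrows A I \in unitmx)
  (mu : 'rV[R]_d -> R) (hpdf : is_pdf mu) (hlip : log_lipschitz1 mu) :
  let m := ln ((99 / 100 : R)^-1) / (2 * d%:R) in
  (Pr mu [set z | I \in Mset A (c + z) (c' + z) m] >=
   (99 / 100 : R)%:E * Pr mu [set z | I \in Mset A (c + z) (c' + z) 0])%E.
Proof.
cbv zeta; set m := ln _ / (2 * _).
set AI := subrows A I.
set L := ln ((99 / 100 : R)^-1).
have L0 : 0 <= L by apply: ln_ge0; rewrite invf_ge1 //; lra.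
have m0 : 0 <= m by apply: divr_ge0 => //; rewrite mulr_ge0.
set δ : 'rV[R]_d := m *: (const_mx 1 *m AI).
have hδ : enorm δ <= L.
  rewrite /δ enorm_scale ger0_norm // mulmx_sum_row.
  apply: (@le_trans _ _ (m * (2 * d%:R))).
    apply: (ler_wpM2l m0); apply: le_trans (enorm_sum _) _.
    have -> : 2 * d%:R = \sum_(i < d) (2 : R) by rewrite sumr_const card_ord mulr_natr.
    apply: ler_sum => i _; rewrite enorm_scale mxE normr1 mul1r.
    by have [k ->] := subrows_row A hI i; exact: hA.
  have [d0|dn0] := eqVneq d 0%N; first by rewrite d0 mulr0 mulr0.
  rewrite /m divfK //; rewrite mulf_neq0 // pnatr_eq0 //.
have hδinv : δ *m invmx AI = const_mx m.
  rewrite /δ -scalemxAl -mulmxA mulmxV // mulmx1.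
  by apply/rowP => j; rewrite !mxE mulr1.
have P2 : forall z, 99 / 100 * mu z <= mu (z + δ).
  move=> z; have [mupos lip] := hlip.
  have := lip (z + δ) z; rewrite addrAC subrr add0r => H.
  rewrite -ler_ln ?posrE ?mulr_gt0 //.
  rewrite lnM ?posrE //.
  have : ln (99 / 100 : R) = - L by rewrite /L lnV ?opprK // posrE; lra.
  move=> ->.
  have := ler_norm (ln (mu z) - ln (mu (z + δ))); rewrite distrC.
  lra.
clearbody δ.
pose a : nat -> R := fun i => if @insub _ (fun k => (k < d)%N) 'I_d i is Some j then δ 0 j else 0.
have a0 : forall i, (d <= i)%N -> a i = 0.
  by move=> i; rewrite /a leqNgt => /negbTE h; rewrite insubF.
have rowa : forall x : nat -> R, \row_(i < d) (x i + a i) = \row_(i < d) x i + δ.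
  by move=> x; apply/rowP => i; rewrite !mxE /a (valK i).
set S0 := [set z | I \in Mset A (c + z) (c' + z) 0].
set Sm := [set z | I \in Mset A (c + z) (c' + z) m].
rewrite /Pr /leb_int /=.
set Fm := fun x : nat -> R => ((\1_Sm (\row_(i<d) x i) * mu (\row_(i<d) x i))%:E).
have mupos := hlip.1.
have Fm0 : forall x, (0 <= Fm x)%E.
  by move=> y; rewrite /Fm lee_fin indicE mulr_ge0 // ltW.
apply: le_trans (iint_scale _ _ _) _ => [|x|]; first lra.
  by rewrite lee_fin indicE mulr_ge0 // ltW.
apply: (@le_trans _ _ (iint d (fun x => Fm (fun i => x i + a i)))).
  apply: iint_mono => x.
    by rewrite -EFinM lee_fin mulr_ge0 ?indicE ?mulr_ge0 // ?ltW //; lra.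
  rewrite /Fm rowa -EFinM lee_fin !indicE.
  set z := \row_(i < d) x i.
  have [h0|h0] := boolP (z \in S0).
    have : z + δ \in Sm.
      apply: mem_set; rewrite /Sm /=; apply: mset_shift => //.
      exact: (set_mem h0).
    move=> ->; rewrite !mul1r; exact: P2.
  by rewrite mul0r mulr0 mulr_ge0 // ltW.
have := @iint_shift R d (fun x => Fm (fun i => x i + a i)) (fun i => - a i).
have -> : (fun x => Fm (fun i => x i + - a i + a i)) = Fm.
  by apply/funext => y; congr Fm; apply/funext => i; rewrite subrK.
apply => [i di|x]; first by rewrite a0 // oppr0.
exact: Fm0.
Qed.
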